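(* The language $\{\,a^mb^{2^m}\mid m\ge1\,\}$ belongs to $\mathscr{L}_{rt}(\mathrm{SC\text{-}OCA}(n))$, i.e., it is accepted by a real-time one-way cellular automaton whose total number of communications on accepted inputs $w$ is $O(|w|)$.
   Context: A CA is $\langle S,F,A,B,\#,b_l,b_r,\delta\rangle$ with states $S$, accepting states $F$, input alphabet $A\subseteq S$, communication symbols $B$, boundary $\#\notin B$, communication functions $b_l,b_r:S\to B\cup\{\bot\}$ ($\bot$: nothing sent), local transition $\delta:(B\cup\{\#,\bot\})\times S\times(B\cup\{\#,\bot\})\to S$; cells $1..|w|$ start with the input letters and update synchronously by $c_{t+1}(i)=\delta(b_r(c_t(i-1)),c_t(i),b_l(c_t(i+1)))$, outer cells getting $\#$ once at the first step and $\bot$ afterwards. Acceptance: leftmost cell enters $F$. Real time: accepted inputs accepted within $|w|$ steps. OCA: $b_r\equiv\bot$ and the leftmost cell gets no boundary symbol. $\mathrm{com}(i,t)$: number of steps $j<t$ with $b_r(c_j(i))\ne\bot$ or $b_l(c_j(i+1))\ne\bot$; $\mathrm{scom}(w)=\sum_{i=1}^{|w|-1}\mathrm{com}(i,t(|w|))$ with $t$ the time complexity. $\mathrm{SC\text{-}OCA}(f)$: OCAs such that every accepted $w$ is accepted with $\mathrm{scom}(w)\le g(|w|)$ for some $g\in O(f)$. *)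

(* Defs.v *)
From mathcomp Require Import all_boot.
Unset Printing Implicit Defensive.

(* Symbols a cell may receive from a neighbour: nothing (bot),
   the boundary symbol #, or a communication symbol of B. *)
Inductive msg (B : Type) := MBot | MBound | MSym of B.
Arguments MSym {B}.
Arguments MBot {B}. Arguments MBound {B}.

Definition of_opt {B : Type} (o : option B) : msg B :=
  if o is Some b then MSym b else MBot.

(* Cellular automaton <S,F,A,B,#,b_l,b_r,delta> over the input alphabet
   {a,b}, encoded as bool (a = false, b = true); A ⊆ S is modelled by an
   injective embedding inp.  None in b_l/b_r stands for bot. *)
Record CA := MkCA {
  St : finType;
  Com : finType;
  acc : pred St;
  inp : bool -> St;
  inp_inj : injective inp;
  bl : St -> option Com;
  br : St -> option Com;
  delta : msg Com -> St -> msg Com -> St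
}.

Definition is_OCA (M : CA) : Prop := forall s, br M s = None.

(* Configuration of M (run as an OCA if oca = true, i.e. the leftmost cell
   gets no boundary symbol) on input w at time t; cells are 1..|w|. *)
Fixpoint conf (M : CA) (oca : bool) (w : seq bool) (t : nat) : nat -> St M :=
  match t with
  | 0 => fun i => inp M (nth false w i.-1)
  | t'.+1 =>
      let c := conf M oca w t' in
      let n := size w in
      fun i =>
        let l := if i == 1 then (if (~~ oca) && (t' == 0) then MBound else MBot)
                 else of_opt (br M (c i.-1)) in
        let r := if i == n then (if t' == 0 then MBound else MBot)
                 else of_opt (bl M (c i.+1)) in
        delta M l (c i) r
  end.

Definition oconf (M : CA) := conf M true.

Definition accepted_at (M : CA) (w : seq bool) (t : nat) : Prop :=
  0 < size w /\ acc M (oconf M w t 1).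

Definition accepts (M : CA) (w : seq bool) : Prop := exists t, accepted_at M w t.

Definition real_time (M : CA) : Prop :=
  forall w, accepts M w -> exists2 t, t <= size w & accepted_at M w t.

Definition com (M : CA) (w : seq bool) (i t : nat) : nat :=
  count (fun j => (br M (oconf M w j i) != None) || (bl M (oconf M w j i.+1) != None))
        (iota 0 t).

(* scom(w), with time complexity t(n) = n (real time) *)
Definition scom (M : CA) (w : seq bool) : nat :=
  \sum_(1 <= i < size w) com M w i (size w).

Definition SC_linear (M : CA) : Prop :=
  exists c n0, forall w, accepts M w -> n0 <= size w -> scom M w <= c * size w.

Definition Lang (w : seq bool) : Prop :=
  exists2 m, 1 <= m & w = nseq m false ++ nseq (2 ^ m) true.

(* Main.v *)
From HB Require Import structures.
Require Import Defs.
From mathcomp Require Import all_boot.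
Set Implicit Arguments. Unset Strict Implicit.

Inductive st := SA | SB | BW | BE | BD | AD
  | A0 of 'I_4 & bool & bool
  | A1 of bool & 'I_6 & bool & bool & bool.

Definition enc (s : st) : ('I_6 + ('I_4 * bool * bool)) + (bool * 'I_6 * bool * bool * bool) :=
  match s with
  | SA => inl (inl (@Ordinal 6 0 erefl))
  | SB => inl (inl (@Ordinal 6 1 erefl))
  | BW => inl (inl (@Ordinal 6 2 erefl))
  | BE => inl (inl (@Ordinal 6 3 erefl))
  | BD => inl (inl (@Ordinal 6 4 erefl))
  | AD => inl (inl (@Ordinal 6 5 erefl))
  | A0 c e a => inl (inr (c, e, a))
  | A1 p c j e a => inr (p, c, j, e, a)
  end.
Definition dec (x : ('I_6 + ('I_4 * bool * bool)) + (bool * 'I_6 * bool * bool * bool)) : option st :=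
  match x with
  | inl (inl k) => match val k with 0 => Some SA | 1 => Some SB | 2 => Some BW | 3 => Some BE
                   | 4 => Some BD | 5 => Some AD | _ => None end
  | inl (inr (c, e, a)) => Some (A0 c e a)
  | inr (p, c, j, e, a) => Some (A1 p c j e a)
  end.
Lemma encK : pcancel enc dec. Proof. by case. Qed.
HB.instance Definition _ := Finite.copy st (pcan_type encK).

Definition Com := (bool + (bool * bool))%type.

Definition hasE (r : msg Com) : bool := if r is MSym (inr (_, e)) then e else false.
Definition hasP (r : msg Com) : bool := if r is MSym (inr (p, _)) then p else false.

Definition dlt (l : msg Com) (s : st) (r : msg Com) : st :=
  match s with
  | SA => match r with
          | MBound => AD
          | MSym (inl true) => A0 (inord 1) false false
          | MSym (inl false) => A1 false (inord 0) false false false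
          | _ => AD end
  | SB => match r with
          | MBound => BE
          | MSym (inl true) => BW
          | _ => BD end
  | BW => if hasE r then BE else BW
  | BE => BD
  | BD => BD
  | AD => AD
  | A0 c e ac => A0 (inord (minn c.+1 3)) (hasE r) (hasE r && (val c == 2))
  | A1 par cnt jg e ac => A1 (par (+) hasP r) (if hasP r then inord (minn cnt.+1 5) else cnt)
                         (hasP r) (hasE r) [&& hasE r, val cnt == 4 & jg]
  end.

Definition blf (s : st) : option Com :=
  match s with
  | SA => Some (inl false)
  | SB => Some (inl true)
  | BE => Some (inr (false, true))
  | A0 _ e _ => Some (inr (true, e))
  | A1 par _ jg e _ => if (jg && ~~ par) || e then Some (inr (jg && ~~ par, e)) else None
  | _ => None
  end.

Definition accf (s : st) : bool :=
  match s with A0 _ _ ac => ac | A1 _ _ _ _ ac => ac | _ => false end.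

Definition inpf (b : bool) : st := if b then SB else SA.
Lemma inpf_inj : injective inpf. Proof. by do 2 case. Qed.

Definition M : CA := @MkCA st (Com : finType) accf inpf inpf_inj blf (fun _ => None) dlt.

Definition G (w : seq bool) t := oconf M w t 1.

Lemma shift t w i : 0 < i <= size w -> oconf M w t i = oconf M (drop i.-1 w) t 1.
Proof.
elim: t w i => [|t IH] w i /andP[i0 iw].
  by rewrite /oconf /= nth_drop addn0.
rewrite /oconf /= if_same.
have E1 := IH w i; rewrite /oconf in E1; rewrite E1 ?i0 ?iw //.
rewrite size_drop.
have [e|ne] := eqVneq i (size w).
  rewrite -e; move: i0; clear iw E1 IH e; case: i => // k _; by rewrite /= subSnn.
have iw' : i < size w by rewrite ltn_neqAle ne iw.
have -> : (1 == size w - i.-1) = false.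
  have h : forall n k, 0 < k -> k < n -> (1 == n - k.-1) = false.
    move=> n [|k] //= _ h; apply/negbTE.
    by rewrite neq_ltn ltn_subRL addn1 h ?orbT.
  exact: h.
have E2 := IH w i.+1; rewrite /oconf in E2; rewrite E2 ?iw' //=.
have E3 := IH (drop i.-1 w) 2; rewrite /oconf in E3; rewrite E3 /=.
  by rewrite drop_drop add1n prednK.
rewrite size_drop.
have h : forall n k, 0 < k -> k < n -> 1 < n - k.-1.
  by move=> n [|k] //= _ h; rewrite ltn_subRL addn1.
exact: h.
Qed.

Lemma G0 u : G u 0 = inpf (head false u).
Proof. by case: u. Qed.

Lemma Gstep u t : 0 < size u -> G u t.+1 = dlt MBot (G u t)
  (if size u == 1 then (if t == 0 then MBound else MBot) else of_opt (blf (G (behead u) t))).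
Proof.
move=> su; rewrite /G /oconf /= eq_sym.
case: ifP => // s1.
have := @shift t u 2; rewrite /oconf => ->; first by rewrite drop1.
by move: su s1; case: (size u) => [|[|]].
Qed.

Definition isB (v : seq bool) := (v != [::]) && all (pred1 true) v.

Definition stB (u : seq bool) t : st :=
  if t == 0 then SB else
  if isB u then (if t < size u then BW else if t == size u then BE else BD)
  else if head true (behead u) then BW else BD.

Definition streamB (u : seq bool) t : option Com :=
  if t == 0 then Some (inl true) else
  if isB u && (t == size u) then Some (inr (false, true)) else None.

Lemma blB u t : blf (stB u t) = streamB u t.
Proof.
rewrite /stB /streamB; case: eqP => // _.
case: (isB u) => /=; last by case: ifP.
by case: ltngtP.
Qed.

Lemma charB u t : G (true :: u) t = stB (true :: u) t.
Proof.
elim: u t => [|x u IHu] t.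
  elim: t => [|t IH]; first by [].
  rewrite Gstep // IH /stB /=.
  by case: t {IH} => [|[|t]].
case: x IHu => IHu; elim: t => [|t IH] //; rewrite Gstep // IH /=; last first.
  by rewrite /stB /isB /=; case: t {IH}.
rewrite IHu blB /stB /streamB /isB /=.
case: t {IH} => [|t] /=; first by case: (all _ _).
case: (all (pred1 true) u) => //=.
rewrite !ltnS !eqSS.
by case: (ltngtP t (size u)) => // _; case: (_ == _).
Qed.

Fixpoint P (d s : nat) : bool :=
  if d is d'.+1 then [&& 0 < s, P d' s.-1 & ~~ odd (count (P d') (iota 0 s))] else 0 < s.

Lemma P0 d : P d 0 = false. Proof. by case: d. Qed.

Definition PA d (v : seq bool) s := (v != [::]) && P d s.
Definition EA d (v : seq bool) s := isB v && (s == size v + d.+1).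
Definition EB (v : seq bool) s := isB v && (s == size v).
Definition streamA d v s : option Com :=
  if s == 0 then Some (inl false) else
  if PA d v s || EA d v s then Some (inr (PA d v s, EA d v s)) else None.
Definition cnt d v x := count (PA d v) (iota 0 x).

Definition stA d v t : st :=
  if t == 0 then SA else
  match d with
  | 0 => if v == [::] then AD else A0 (inord (minn t 3)) (EB v t.-1) (EB v t.-1 && (t == 3))
  | d'.+1 => A1 (odd (cnt d' v t)) (inord (minn (cnt d' v t) 5)) (PA d' v t.-1) (EA d' v t.-1)
            [&& EA d' v t.-1, 1 < t, minn (cnt d' v t.-1) 5 == 4 & PA d' v t.-2]
  end.

Lemma blA d v t : blf (stA d v t) = streamA d v t.
Proof.
rewrite /stA /streamA; case: t => [|t] //=.
case: d => [|d].
  case: v => [|x v] //=.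
  by rewrite /EB /EA addn1 eqSS.
case: v => [|x v] //=.
have -> : EA d (x :: v) t = EA d.+1 (x :: v) t.+1 by rewrite /EA !addnS eqSS.
by [].
Qed.

Lemma hasPA d v s : hasP (of_opt (streamA d v s.+1)) = PA d v s.+1.
Proof. by rewrite /streamA /=; case: (PA d v s.+1); case: (EA d v s.+1). Qed.
Lemma hasEA d v s : hasE (of_opt (streamA d v s.+1)) = EA d v s.+1.
Proof. by rewrite /streamA /=; case: (PA d v s.+1); case: (EA d v s.+1). Qed.

Lemma cntS d v x : cnt d v x.+1 = cnt d v x + PA d v x.
Proof. by rewrite /cnt -addn1 iotaD count_cat /= addn0. Qed.

Lemma charA d v : (v = [::] \/ head false v = true) ->
  forall t, G (nseq d.+1 false ++ v) t = stA d v t.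
Proof.
move=> hv; elim: d => [|d IHd] t.
  case: hv => [->|].
    by elim: t => [|t IH] //; rewrite Gstep // IH /=; case: t {IH}.
  case: v => [|x v] //= ->.
  elim: t => [|t IH] //; rewrite Gstep // IH /= charB blB.
  case: t {IH} => [|t] //=.
    by rewrite /stA /EB /= andbF.
  have -> : hasE (of_opt (streamB (true :: v) t.+1)) = EB (true :: v) t.+1.
    by rewrite /streamB /EB /=; case: (_ && _).
  rewrite /stA /= inordK ?ltnS ?geq_minr //.
  by case: t => [|[|t]].
elim: t => [|t IH] //; rewrite Gstep ?size_cat ?size_nseq // IH /=.
rewrite IHd blA; case: t {IH} => [|t].
  by rewrite /stA /= /cnt /= /PA P0 andbF /EA addnS /=; case: (isB v).
rewrite /stA [in dlt _ _ _]/=. rewrite hasPA hasEA.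
rewrite inordK ?ltnS ?geq_minr // /= (cntS d v t.+1).
have mS : forall c, minn (minn c 5).+1 5 = minn c.+1 5 by move=> c; rewrite -minnSS -minnA.
by case: (PA d v t.+1) => /=; rewrite ?addn1 ?addn0 ?mS ?addbT ?addbF.
Qed.

Lemma countS (a : pred nat) t : count a (iota 0 t.+1) = count a (iota 0 t) + a t.
Proof. by rewrite -addn1 iotaD count_cat /= addn0. Qed.

Lemma cP0 s : count (P 0) (iota 0 s.+1) = s.
Proof.
elim: s => [|s IH] //; by rewrite countS IH addn1.
Qed.

Lemma cPS d t : count (P d.+1) (iota 0 t.+1) = (count (P d) (iota 0 t))./2.
Proof.
elim: t => [|t IH]; first by [].
rewrite countS IH [in RHS]countS.
have -> : P d.+1 t.+1 = P d t && ~~ odd (count (P d) (iota 0 t.+1)) by [].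
rewrite countS; set c := count (P d) (iota 0 t).
case: (P d t) => /=; rewrite ?addn0 ?addn1 ?andbF ?addn0 //.
by rewrite -uphalfE uphalf_half addnC /= negbK.
Qed.

Lemma Tlemma d k s : 0 < k ->
  (P d s && (count (P d) (iota 0 s.+1) == k)) = (s == d + k * 2 ^ d).
Proof.
elim: d k s => [|d IH] k s k0.
  rewrite cP0 expn0 muln1 add0n /=.
  by case: (s =P k) => [->|_]; rewrite ?k0 ?andbF.
case: s => [|s]; first by rewrite P0 /= addSn.
rewrite cPS /= -andbA.
have -> : ~~ odd (count (P d) (iota 0 s.+1)) && ((count (P d) (iota 0 s.+1))./2 == k)
          = (count (P d) (iota 0 s.+1) == k.*2).
  set c := count _ _.
  case oc: (odd c) => /=.
    by apply/esym/negbTE; apply: contraTneq oc => ->; rewrite odd_double.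
  by rewrite -(inj_eq (can_inj doubleK)) even_halfK ?oc.
rewrite IH; last by rewrite double_gt0.
by rewrite addSn eqSS expnS -mul2n mulnCA mulnA.
Qed.

Lemma cP_half d t : 2 * count (P d.+1) (iota 0 t) <= count (P d) (iota 0 t).
Proof.
apply: (@leq_trans (2 * count (P d.+1) (iota 0 t.+1))).
  by rewrite leq_mul2l countS leq_addr orbT.
by rewrite cPS mul2n halfK leq_subr.
Qed.

Lemma decompA w : head true w = false ->
  exists d v, w = nseq d.+1 false ++ v /\ (v = [::] \/ head false v = true).
Proof.
elim: w => [|x w IH] //= ->.
case: w IH => [|y w] IH; first by exists 0, [::]; split; [|left].
case: y IH => IH; first by exists 0, (true :: w); split; [|right].
have [d [v [-> hv]]] := IH erefl.
by exists d.+1, v.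
Qed.

Lemma isB_nseq v : isB v -> v = nseq (size v) true.
Proof. by case/andP=> _ /all_pred1P. Qed.

Lemma accA1 d v t : accf (stA d v t) -> v = nseq (2 ^ d.+1) true /\ t = d.+1 + 2 ^ d.+1.
Proof.
rewrite /stA; case: t => [|t] //=.
case: d => [|d].
  case: eqP => // _ /=.
  case/andP=> /andP[hB /eqP ht] /eqP [h2]; split; last by rewrite h2.
  by rewrite (isB_nseq hB) -ht h2.
case/and4P=> /andP[hB /eqP ht] lt1 hc hp.
case: t ht lt1 hc hp => [|s] // ht _ hc.
rewrite /PA /= => /andP[vn hp].
have c4 : count (P d) (iota 0 s.+1) == 4.
  have mn : forall c, (minn c 5 == 4) = (c == 4) by move=> [|[|[|[|[|[|c]]]]]].
  by move: hc; rewrite mn /cnt /PA vn.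
have := Tlemma d s (isT : 0 < 4); rewrite hp c4 /= => /esym/eqP hs.
have sv : size v = 2 ^ d.+2.
  apply/eqP; rewrite -(eqn_add2r d.+1) -ht hs !expnS mulnA.
  by rewrite addnS addnC.
split; first by rewrite (isB_nseq hB) sv.
by rewrite hs !expnS mulnA !addSn.
Qed.

Lemma isB_nseqT N : 0 < N -> isB (nseq N true).
Proof. move=> h; apply/andP; split; [by case: N h | by apply/all_pred1P; rewrite size_nseq]. Qed.

Lemma accA2 d : accf (stA d (nseq (2 ^ d.+1) true) (d.+1 + 2 ^ d.+1)).
Proof.
case: d => [|d]; first by [].
set v := nseq _ _.
have hB : isB v by rewrite isB_nseqT // expn_gt0.
have e4 : 2 ^ d.+2 = 4 * 2 ^ d by rewrite !expnS mulnA.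
have := Tlemma d (d + 4 * 2 ^ d) (isT : 0 < 4); rewrite eqxx => /andP[hp hc].
rewrite /stA addSn /= addSn /=.
rewrite /EA hB size_nseq /PA.
have vn : v != [::] by case/andP: hB.
rewrite vn e4 hp /=.
have -> : cnt d v (d + 4 * 2 ^ d).+1 = 4 by apply/eqP; rewrite /cnt /PA vn.
by rewrite addnC addnS eqxx.
Qed.

Lemma accB u t : accf (stB u t) = false.
Proof. by rewrite /stB; repeat case: ifP. Qed.

Lemma acc_char w t : 0 < size w -> accf (G w t) -> Lang w /\ t = size w.
Proof.
case: w => [|x w] // _.
case: x; first by rewrite charB accB.
have [d [v [hw hv]]] := @decompA (false :: w) erefl.
rewrite hw charA // => /accA1 [hv' ht]; split.
  by exists d.+1 => //; rewrite hv'.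
by rewrite ht size_cat size_nseq hv' size_nseq.
Qed.

Lemma acc_Lang w : Lang w -> accf (G w (size w)).
Proof.
case=> [[|d]] // _ ->.
rewrite charA; last by right; rewrite -(prednK (expn_gt0 2 d.+1)).
by rewrite size_cat !size_nseq accA2.
Qed.

Lemma cnt_pred1 k n : count (pred1 k) (iota 0 n) <= 1.
Proof. by rewrite (count_uniq_mem _ (iota_uniq 0 n)) leq_b1. Qed.

Lemma countU3 (a b c : pred nat) s : count (fun j => [|| a j, b j | c j]) s <= count a s + count b s + count c s.
Proof.
elim: s => [|x s IH] //=.
have h1 : [|| a x, b x | c x] <= a x + b x + c x by case: (a x); case: (b x); case: (c x).
apply: leq_trans (leq_add h1 IH) _.
move: (nat_of_bool (a x)) (nat_of_bool (b x)) (nat_of_bool (c x)) (count a s) (count b s) (count c s) => p q r A B C.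
by rewrite [p + A + _]addnACA addnACA.
Qed.

Lemma bndA d v n : count (fun j => blf (stA d v j) != None) (iota 0 n) <= 2 + count (P d) (iota 0 n).
Proof.
apply: (@leq_trans (count (fun j => [|| j == 0, P d j | j == size v + d.+1]) (iota 0 n))).
  apply: sub_count => j /=; rewrite blA /streamA.
  case: (j == 0) => //=; rewrite /PA /EA.
  by case: (P d j); case: (j == _); rewrite ?andbF ?andbT ?orbT //= ?andbF; case: (_ != _); case: (isB v).
apply: leq_trans (countU3 _ _ _ _) _.
rewrite addnAC leq_add2r -[2]/(1 + 1).
exact: (leq_add (cnt_pred1 0 n) (cnt_pred1 (size v + d.+1) n)).
Qed.

Lemma bndB u n : count (fun j => blf (stB u j) != None) (iota 0 n) <= 2.
Proof.
apply: (@leq_trans (count (fun j => [|| j == 0, false | j == size u]) (iota 0 n))).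
  apply: sub_count => j /=; rewrite blB /streamB.
  by case: (j == 0) => //=; case: (isB u); case: (j == _).
apply: leq_trans (countU3 _ _ _ _) _.
rewrite count_pred0 addn0 -[2]/(1 + 1).
exact: (leq_add (cnt_pred1 0 n) (cnt_pred1 (size u) n)).
Qed.

Lemma geo (g : nat -> nat) D : (forall d, 2 * g d.+1 <= g d) ->
  \sum_(0 <= d < D) g d <= 2 * g 0.
Proof.
elim: D g => [|D IH] g hg; first by rewrite big_geq.
rewrite big_nat_recl //.
apply: (@leq_trans (g 0 + 2 * g 1)); first by rewrite leq_add2l IH.
by rewrite [2 * g 0]mul2n -addnn leq_add2l hg.
Qed.

Lemma com_cell d i : let w := nseq d.+1 false ++ nseq (2 ^ d.+1) true in
  0 < i < size w ->
  com M w i (size w) <= 2 + (if i < d.+1 then count (P (d.+1 - i.+1)) (iota 0 (size w)) else 0).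
Proof.
move=> w /andP[i0 iw].
rewrite /com.
rewrite (@eq_count _ _ (fun j => blf (G (drop i w) j) != None)); last first.
  move=> j /=.
  by rewrite (@shift j w i.+1) ?iw.
rewrite /w drop_cat size_nseq.
case: ifP => him.
  rewrite drop_nseq -subnSK //.
  apply: leq_trans (bndA (d.+1 - i.+1) (nseq (2 ^ d.+1) true) _); apply: eq_leq; apply: eq_count => j.
  by rewrite charA //; right; rewrite -(prednK (expn_gt0 2 d.+1)).
have : 0 < 2 ^ d.+1 - (i - d.+1).
  rewrite subn_gt0 ltn_subLR; last by rewrite leqNgt him.
  by move: iw; rewrite /w size_cat !size_nseq.
rewrite drop_nseq; case: (2 ^ d.+1 - (i - d.+1)) => // k _.
apply: leq_trans (bndB (true :: nseq k true) _); apply: eq_leq; apply: eq_count => j.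
by rewrite /= charB.
Qed.

Lemma scom_bound d :
  scom M (nseq d.+1 false ++ nseq (2 ^ d.+1) true) <= 4 * size (nseq d.+1 false ++ nseq (2 ^ d.+1) true).
Proof.
set w := nseq d.+1 false ++ _; rewrite /scom.
set n := size w.
have mn : d.+1 <= n by rewrite /n /w size_cat size_nseq leq_addr.
have n0 : 0 < n by apply: leq_trans mn.
set f := fun i => if i < d.+1 then count (P (d.+1 - i.+1)) (iota 0 n) else 0.
apply: (@leq_trans (\sum_(1 <= i < n) (2 + f i))).
  rewrite big_nat_cond [X in _ <= X]big_nat_cond; apply: leq_sum => i /andP[/andP[i1 iw] _].
  by apply: com_cell; rewrite i1 iw.
apply: (@leq_trans (\sum_(0 <= i < n) (2 + f i))).
  by rewrite [X in _ <= X](@big_ltn _ _ _ 0 n) // leq_addl.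
rewrite big_split /= sum_nat_const_nat subn0 mulnC.
rewrite -[4]/(2 + 2) mulnDl leq_add2l.
rewrite (@big_cat_nat _ _ _ d.+1) //=.
have z : \sum_(d.+1 <= i < n) f i = 0.
  by rewrite big_nat_cond big1 // => i /andP[/andP[hm _] _]; rewrite /f ltnNge hm.
rewrite z addn0.
rewrite (@eq_big_nat _ _ _ 0 d.+1 _ (fun i => count (P (d.+1 - i.+1)) (iota 0 n))); last first.
  by move=> i /andP[_ hi]; rewrite /f hi.
rewrite big_nat_rev /=.
rewrite (@eq_big_nat _ _ _ 0 d.+1 _ (fun i => count (P i) (iota 0 n))); last first.
  move=> i /andP[_ hi]; rewrite add0n.
  by rewrite subnSK // subKn // ltnW.
apply: (leq_trans (@geo (fun e => count (P e) (iota 0 n)) d.+1 (fun e => cP_half e n))).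
by rewrite leq_mul2l /= (leq_trans (count_size _ _)) // size_iota.
Qed.

Theorem mainTheorem7 :
  exists M : CA,
    [/\ is_OCA M,
        (forall w, Lang w <-> accepts M w),
        real_time M
      & SC_linear M].
Proof.
exists M; split => //.
- move=> w; split.
    move=> hL; exists (size w); split; last exact: acc_Lang.
    by case: hL => [[|d]] // _ ->; rewrite size_cat size_nseq.
  by case=> t [sz ac]; case: (acc_char sz ac).
- move=> w [t [sz ac]]; exists t; last by [].
  by case: (acc_char sz ac) => _ ->.
- exists 4, 0 => w [t [sz ac]] _.
  case: (acc_char sz ac) => [[[|d]]] // _ -> _.
  exact: scom_bound.
Qed.
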